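(* Let $G$ be a regular graph whose line graph $L(G)$ has at least $3$ vertices. Then $\lambda_3(L(G)) < \frac{|V(L(G))|}{3}$.
   Context: The line graph $L(G)$ has the edges of $G$ as vertices, two being adjacent when they share an endpoint. $\lambda_3$ denotes the third largest eigenvalue (with multiplicity) of the adjacency matrix. *)

(* Defs.v *)
From HB Require Import structures.
From mathcomp Require Import all_boot all_order all_algebra.
From mathcomp Require Import polyrcf.
Set Implicit Arguments. Unset Strict Implicit. Unset Printing Implicit Defensive.
Import Order.TTheory GRing.Theory Num.Theory.
Local Open Scope ring_scope.

Definition simple_graph (T : finType) (e : rel T) : Prop :=
  symmetric e /\ irreflexive e.

Definition regular (T : finType) (e : rel T) : Prop :=
  exists d : nat, forall v : T, #|[set w | e v w]| = d.

Definition is_edge (T : finType) (e : rel T) (E : {set T}) : bool :=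
  [exists u, exists v, e u v && (E == [set u; v])].

Definition edge_set (T : finType) (e : rel T) : {set {set T}} :=
  [set E | is_edge e E].

Definition line_adj (T : finType) (E F : {set T}) : bool :=
  (E != F) && (E :&: F != set0).

Definition nL (T : finType) (e : rel T) : nat := #|edge_set e|.

Definition line_adj_mx (R : nzRingType) (T : finType) (e : rel T)
  : 'M[R]_(nL e) :=
  \matrix_(i, j) (line_adj (enum_val i) (enum_val j))%:R.

Definition eigenvalues_desc (R : rcfType) (n : nat) (A : 'M[R]_n) : seq R :=
  let p := char_poly A in
  sort (fun x y : R => y <= x) (flatten [seq nseq (mup x p) x | x <- rootsR p]).

(* k-th largest eigenvalue (1-based), counted with multiplicity. *)
Definition lambda (R : rcfType) (n : nat) (k : nat) (A : 'M[R]_n) : R :=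
  nth 0 (eigenvalues_desc A) k.-1.

(* Main.v *)
Require Import Defs.
From HB Require Import structures.
From mathcomp Require Import all_boot all_order all_algebra.
From mathcomp Require Import polyrcf.
From mathcomp Require Import complex spectral sesquilinear.
From mathcomp Require Import zify ring lra.
Import Order.TTheory GRing.Theory Num.Theory.

Lemma card_sum (X : finType) (A : {set X}) (P : pred X) :
  #|[set x in A | P x]| = \sum_(x in A) (P x : nat).
Proof.
rewrite -sum1_card [LHS]big_mkcond [RHS]big_mkcond; apply: eq_bigr => x _.
by rewrite !inE; case: (x \in A); case: (P x).
Qed.

Lemma card_sumT (X : finType) (A : {set X}) :
  (\sum_(x : X) (x \in A : nat))%N = #|A|.
Proof.
rewrite -sum1_card [RHS]big_mkcond; apply: eq_bigr => x _.
by case: (x \in A).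
Qed.

Section Comb.
Variables (T : finType) (e : rel T).
Hypothesis Hsym : symmetric e.
Hypothesis Hirr : irreflexive e.
Variable d : nat.
Hypothesis Hreg : forall v : T, #|[set w | e v w]| = d.

Local Notation ES := (edge_set e).
Definition Einc u := [set F in ES | u \in F].

Lemma edgeP E : reflect (exists a b, e a b /\ E = [set a; b]) (E \in ES).
Proof.
rewrite inE /is_edge; apply: (iffP existsP) => [[a /existsP [b /andP [hab /eqP ->]]]|[a [b [hab ->]]]].
  by exists a, b.
by exists a; apply/existsP; exists b; rewrite hab eqxx.
Qed.

Lemma edgeP' E : reflect (exists a b, e a b /\ E = [set a; b]) (is_edge e E).
Proof. by move: (edgeP E); rewrite inE. Qed.

Lemma neq_of_e {a b} : e a b -> a != b.
Proof. by move=> hab; apply: contraTneq hab => ->; rewrite Hirr. Qed.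

Lemma Einc_img u : Einc u = [set [set u; w] | w in [set w | e u w]].
Proof.
apply/setP => F; rewrite inE; apply/andP/imsetP.
  move=> [/edgeP [a [b [hab ->]]]]; rewrite !inE => /orP [] /eqP ->.
    by exists b; rewrite ?inE.
  by exists a; rewrite ?inE 1?Hsym // setUC.
move=> [w]; rewrite inE => huw ->; split; last by rewrite !inE eqxx.
by apply/edgeP; exists u, w.
Qed.

Lemma card_Einc u : #|Einc u| = d.
Proof.
rewrite Einc_img card_imset ?Hreg // => w1 w2 h.
have : w1 \in [set u; w2] by rewrite -h !inE eqxx orbT.
rewrite !inE => /orP [/eqP w1u|/eqP //].
have : w2 \in [set u; w1] by rewrite h !inE eqxx orbT.
by rewrite !inE w1u orbb => /eqP ->.
Qed.

Lemma EincI a b : e a b -> Einc a :&: Einc b = [set [set a; b]].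
Proof.
move=> hab; apply/setP => F; rewrite !inE.
apply/idP/idP.
  move=> /andP [/andP [FE aF] /andP [_ bF]].
  move/edgeP': FE => [x [y [hxy Fxy]]].
  rewrite eq_sym eqEcard; apply/andP; split.
    by apply/subsetP => z; rewrite !inE => /orP [] /eqP ->.
  by rewrite Fxy !cards2 (neq_of_e hxy) (neq_of_e hab).
move/eqP => ->; rewrite !inE !eqxx orbT /= andbT.
by rewrite andbb; apply/edgeP'; exists a, b.
Qed.

Lemma line_row a b : e a b ->
  #|[set F in ES | line_adj [set a; b] F]| = (d + d - 1 - 1)%N.
Proof.
move=> hab.
have Ein : [set a; b] \in ES by apply/edgeP; exists a, b.
have -> : [set F in ES | line_adj [set a; b] F] = (Einc a :|: Einc b) :\ [set a; b].
  apply/setP => F; rewrite !inE /line_adj.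
  case: (is_edge e F) => //=; rewrite ?andbT ?andbF //=.
  rewrite eq_sym; case: (F == [set a; b]) => //=.
  apply/set0Pn/orP.
    by move=> [x]; rewrite !inE => /andP [] /orP [] /eqP -> ->; [left|right].
  by case=> h; [exists a | exists b]; rewrite !inE eqxx ?orbT h.
have Ein2 : [set a; b] \in Einc a :|: Einc b by rewrite !inE !eqxx andbT; move: Ein; rewrite inE => ->.
have h := cardsD1 [set a; b] (Einc a :|: Einc b); rewrite Ein2 add1n in h.
have -> : #|(Einc a :|: Einc b) :\ [set a; b]| = #|Einc a :|: Einc b|.-1 by rewrite h.
by rewrite cardsU EincI // cards1 !card_Einc !subn1.
Qed.

Lemma handshake : (#|T| * d = 2 * #|ES|)%N.
Proof.
transitivity (\sum_(u : T) d)%N; first by rewrite sum_nat_const.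
transitivity (\sum_(u : T) #|Einc u|)%N.
  by apply: eq_bigr => u _; rewrite card_Einc.
under eq_bigr => u _ do rewrite /Einc card_sum.
rewrite exchange_big /=.
transitivity (\sum_(F in ES) 2)%N; last by rewrite sum_nat_const mulnC.
apply: eq_bigr => F /edgeP [x [y [hxy ->]]].
by rewrite card_sumT cards2 (neq_of_e hxy).
Qed.

Lemma deg_le (v : T) : (d <= #|T|.-1)%N.
Proof.
rewrite -(Hreg v) -(cardsC1 v); apply: subset_leq_card.
by apply/subsetP => w; rewrite !inE; apply: contraTneq => ->; rewrite Hirr.
Qed.
End Comb.

Definition Pb (k t : nat) : bool :=
  (9*k*(t+3)*t < 2*(3*k+t+3)^2 + t*((t+3)^2 + 18*k^2))%N.

Lemma finchk : all (fun k => all (fun t => Pb k t) (iota 0 48)) (iota 0 9).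
Proof. vm_compute. reflexivity. Qed.

Lemma natP (k t : nat) : ((k+1)*(k+2) <= 2*(t+3))%N -> Pb k t.
Proof.
move=> h.
have [hk|hk] := leqP 9 k.
  have h6 : (6*k <= t+3)%N by nia.
  have h9 : (9*k*(t+3) <= (t+3)^2 + 18*k^2)%N.
    move: h6; set m := (t+3)%N; move=> h6.
    have [u ->] : exists u, m = (6*k + u)%N by exists (m - 6*k)%N; lia.
    nia.
  rewrite /Pb.
  have h2 : (0 < 2*(3*k+t+3)^2)%N by nia.
  have := leq_mul (leqnn t) h9.
  nia.
have [ht|ht] := leqP 48 t.
  have h6 : (9*k*(t+3) <= (t+3)^2 + 18*k^2)%N by nia.
  rewrite /Pb.
  have h2 : (0 < 2*(3*k+t+3)^2)%N by nia.
  have := leq_mul (leqnn t) h6.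
  nia.
have /allP/(_ k) := finchk.
rewrite mem_iota add0n => /(_ hk) /allP /(_ t).
by rewrite mem_iota add0n => /(_ ht).
Qed.


Local Open Scope ring_scope.

Lemma core (R : realFieldType) (k t : nat) (L : R) :
  ((k+1)*(k+2) <= 2*(t+3))%N ->
  (t+3)%:R / 3 <= L ->
  (forall c : R, 0 <= c -> (2*k%:R + c)^+2 + 2*(L + c)^+2 <= 2*(t+3)%:R*k%:R + (t+3)%:R*c^+2) -> False.
Proof.
move=> h hL H.
have := @natP k t h; rewrite /Pb -(ltr_nat R) !(natrD, natrM, natrX).
set kk := (k%:R : R) in H hL *; set tt := (t%:R : R) in H hL *.
rewrite natrD in H hL.
have kk0 : 0 <= kk by rewrite ler0n.
have tt0 : 0 <= tt by rewrite ler0n.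
move=> Pr.
have [t0|tpos] := eqVneq t 0%N.
  have := H 1 ler01; rewrite /tt t0 /= in hL *.
  have L1 : 1 <= L by move: hL; rewrite add0r divff // pnatr_eq0.
  rewrite add0r expr1n mulr1 => HH.
  have h4 : 4 <= (L + 1) ^+ 2 by clear -L1; rewrite expr2; nra.
  have h5 : 0 < (2 * kk - 1/2) ^+ 2 + 5 by rewrite ltr_pwDr ?sqr_ge0 //.
  clear -HH h4 h5; rewrite !expr2 in HH h4 h5.
  nra.
have ttp : 0 < tt by rewrite ltr0n lt0n.
have ttn0 : tt != 0 by rewrite lt0r_neq0.
pose c := (6 * kk + 2 * (tt + 3)) / (3 * tt).
have c0 : 0 <= c by rewrite /c divr_ge0 // ?addr_ge0 ?mulr_ge0 // addr_ge0.
have := H c c0.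
set d := L - (tt + 3) / 3.
have d0 : 0 <= d by rewrite /d subr_ge0.
have -> : L = (tt + 3) / 3 + d by rewrite /d addrC subrK.
move=> Hc.
have HX : 0 <= 9 * tt * (2 * (tt + 3) * kk + (tt + 3) * c ^+ 2 - (2 * kk + c) ^+ 2
     - 2 * ((tt + 3) / 3 + d + c) ^+ 2).
  by apply: mulr_ge0; [rewrite mulr_ge0 // | rewrite subr_ge0 lerBrDr addrC].
have G : 9 * tt * (2 * (tt + 3) * kk + (tt + 3) * c ^+ 2 - (2 * kk + c) ^+ 2
     - 2 * ((tt + 3) / 3 + d + c) ^+ 2) =
   - 2 * (2 * (3 * kk + (tt + 3)) ^+ 2 + tt * ((tt + 3) ^+ 2 - 9 * (tt + 3) * kk + 18 * kk ^+ 2))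
   - 9 * tt * (4 * d * ((tt + 3) / 3 + c) + 2 * d ^+ 2).
  rewrite /c; field; exact: ttn0.
have D0 : 0 <= 9 * tt * (4 * d * ((tt + 3) / 3 + c) + 2 * d ^+ 2).
  apply: mulr_ge0; first by rewrite mulr_ge0.
  apply: addr_ge0; last by rewrite mulr_ge0 // sqr_ge0.
  by rewrite !mulr_ge0 // addr_ge0 // divr_ge0 // addr_ge0.
rewrite G in HX.
lra.
Qed.

Lemma char_poly_similar (F : fieldType) n (P D : 'M[F]_n) :
  P \in unitmx -> char_poly (invmx P *m D *m P) = char_poly D.
Proof.
move=> Pu.
rewrite /char_poly.
set pP := map_mx polyC P.
set pPi := map_mx polyC (invmx P).
have h1 : pPi *m pP = 1%:M by rewrite -map_mxM mulVmx // map_mx1.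
have -> : char_poly_mx (invmx P *m D *m P) = pPi *m char_poly_mx D *m pP.
  rewrite /char_poly_mx mulmxBr mulmxBl mul_mx_scalar -scalemxAl h1 scalemx1.
  by rewrite !map_mxM.
by rewrite !det_mulmx mulrAC -det_mulmx h1 det1 mul1r.
Qed.

Lemma tr_similar (F : fieldType) n (P D : 'M[F]_n) :
  P \in unitmx -> \tr (invmx P *m D *m P) = \tr D.
Proof. by move=> Pu; rewrite mxtrace_mulC mulmxA mulmxV // mul1mx. Qed.

Section Spec.
Variable R : rcfType.
Local Notation C := (complex R).
Local Notation toC := (real_complex R).

Lemma sym_spectral n (A : 'M[R]_n) : A^T = A -> exists r : 'I_n -> R,
  [/\ char_poly A = \prod_i ('X - (r i)%:P), \tr A = \sum_i r i
    & \tr (A *m A) = \sum_i r i ^+ 2].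
Proof.
move=> Asym.
pose AC := map_mx toC A.
have Aherm : AC \is hermsymmx.
  apply: realsym_hermsym.
    apply/is_hermitianmxP; rewrite expr0 scale1r.
    by apply/matrixP => i j; rewrite /AC !mxE -[in LHS]Asym mxE.
  by apply/mxOverP => i j; rewrite /AC mxE complex_real.
have /orthomx_spectralP Aeq := hermitian_normalmx Aherm.
have Dreal := hermitian_spectral_diag_real Aherm.
set P := spectralmx AC in Aeq.
set D := spectral_diag AC in Aeq Dreal.
have Pu : P \in unitmx by apply: spectral_unit.
pose r i := complex.Re (D 0 i).
have Dr i : D 0 i = toC (r i).
  by rewrite /r RRe_real //; move/mxOverP: Dreal; apply.
exists r; split.
- apply: (map_poly_inj toC).
  rewrite map_char_poly -/AC Aeq char_poly_similar // char_poly_trig ?diag_mx_is_trig //.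
  rewrite rmorph_prod; apply: eq_bigr => i _.
  by rewrite mxE eqxx mulr1n Dr rmorphB /= map_polyX map_polyC.
- apply: complexI.
  rewrite -trace_map_mx -/AC Aeq tr_similar // mxtrace_diag rmorph_sum.
  by apply: eq_bigr => i _; rewrite Dr.
- apply: complexI.
  rewrite -trace_map_mx map_mxM -/AC Aeq.
  have -> : invmx P *m diag_mx D *m P *m (invmx P *m diag_mx D *m P) =
      invmx P *m (diag_mx D *m diag_mx D) *m P.
    by rewrite !mulmxA mulmxK.
  rewrite tr_similar // mulmx_diag mxtrace_diag rmorph_sum.
  by apply: eq_bigr => i _; rewrite mxE Dr rmorphXn.
Qed.
End Spec.

Lemma eig_perm (R : rcfType) n (A : 'M[R]_n) (r : 'I_n -> R) :
  char_poly A = \prod_i ('X - (r i)%:P) ->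
  perm_eq (eigenvalues_desc A) [seq r i | i <- enum 'I_n].
Proof.
move=> cpA; set s := [seq r i | i <- enum 'I_n].
have cp : char_poly A = \prod_(x <- s) ('X - x%:P).
  by rewrite cpA big_map big_enum.
rewrite /eigenvalues_desc perm_sort.
set p := char_poly A.
have pn0 : p != 0 by apply: monic_neq0; apply: char_poly_monic.
apply/allP => z _; apply/eqP.
rewrite count_flatten sumnE !big_map.
under eq_bigr => x _ do rewrite count_nseq /=.
have mz : mup z p = count_mem z s by rewrite /p cp mu_prod_XsubC.
have rinR : forall x, (x \in rootsR p) = root p x.
  by move=> x; rewrite -(roots_on_rootsR pn0 x) in_itv.
case: (boolP (z \in rootsR p)) => zin.
  rewrite (bigD1_seq z) //= ?uniq_roots // eqxx mul1n big1 ?addn0 -?mz //.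
  by move=> x /negbTE; rewrite eq_sym => ->.
rewrite big1_seq; last by move=> x /andP [] _ xin; case: eqP xin zin => // -> ->.
by rewrite -mz mupNroot // -rinR.
Qed.

Section Mat.
Variables (R : rcfType) (T : finType) (e : rel T).
Hypothesis Hsym : symmetric e.
Hypothesis Hirr : irreflexive e.
Variable d : nat.
Hypothesis Hreg : forall v : T, #|[set w | e v w]| = d.

Local Notation A := (line_adj_mx R e).
Local Notation K2 := (d + d - 1 - 1)%N.

Lemma A_sym : A^T = A.
Proof.
apply/matrixP => i j; rewrite !mxE /line_adj eq_sym setIC //.
Qed.

Lemma A_tr : \tr A = 0.
Proof. by apply: big1 => i _; rewrite mxE /line_adj eqxx. Qed.

Lemma A_row (i : 'I_(nL e)) : \sum_j A i j = K2%:R.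
Proof.
have : enum_val i \in edge_set e by apply: enum_valP.
move/edgeP => [a [b [hab Ei]]].
under eq_bigr => j _ do rewrite mxE.
rewrite -(big_enum_val (fun F => (line_adj (enum_val i) F)%:R : R)).
by rewrite -natr_sum -card_sum Ei (@line_row T e Hsym Hirr d Hreg a b hab).
Qed.

Lemma A_tr2 : \tr (A *m A) = (nL e * K2)%:R.
Proof.
rewrite /mxtrace.
transitivity (\sum_(i < nL e) (K2%:R : R)).
  apply: eq_bigr => i _; rewrite mxE -(A_row i); apply: eq_bigr => j _.
  have -> : A j i = A i j by rewrite -{1}A_sym mxE.
  by rewrite !mxE; case: (line_adj (enum_val i) (enum_val j)); rewrite ?mul1r ?mul0r.
by rewrite sumr_const card_ord natrM mulr_natl.
Qed.

Lemma A_root : (0 < nL e)%N -> root (char_poly A) K2%:R.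
Proof.
move=> m0; rewrite -eigenvalue_root_char; apply/eigenvalueP.
exists (const_mx 1).
  apply/rowP => j; rewrite !mxE -(A_row j).
  under eq_bigr => i _ do rewrite mxE mul1r.
  by rewrite mulr1; apply: eq_bigr => i _; rewrite -{1}A_sym mxE.
apply/eqP => /rowP /(_ (Ordinal m0)); rewrite !mxE => /eqP; rewrite oner_eq0 //.
Qed.
End Mat.

Section LC.
Variable R : realFieldType.

Lemma sum_sq_shift (s : seq R) c : \sum_(x <- s) (x + c)^+2 =
  \sum_(x <- s) x^+2 + 2 * c * \sum_(x <- s) x + (size s)%:R * c^+2.
Proof.
elim: s => [|x s IH]; first by rewrite !big_nil mulr0 mul0r !addr0.
rewrite !big_cons IH /= -addn1 natrD; ring.
Qed.

Lemma le_sum_mem (f : R -> R) (l : seq R) x : (forall y, 0 <= f y) -> x \in l ->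
  f x <= \sum_(y <- l) f y.
Proof.
move=> f0; elim: l => [|y l IH] //; rewrite in_cons big_cons => /orP [/eqP ->|/IH h].
  by rewrite lerDl sumr_ge0.
by rewrite (le_trans h) // lerDr.
Qed.

Lemma sq_mono (a b : R) : 0 <= a -> a <= b -> a ^+ 2 <= b ^+ 2.
Proof. by move=> ha hab; rewrite ler_pXn2r // ?nnegrE // (le_trans ha). Qed.

Lemma list_core (s : seq R) (k t : nat) :
  ((k+1)*(k+2) <= 2*(t+3))%N -> size s = (t+3)%N ->
  sorted (fun x y => y <= x) s ->
  \sum_(x <- s) x = 0 -> \sum_(x <- s) x ^+ 2 = 2 * (t+3)%:R * k%:R ->
  2 * k%:R \in s -> nth 0 s 2 < (t+3)%:R / 3.
Proof.
move=> hkt hsz hsort hs1 hs2 hmem.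
rewrite ltNge; apply/negP => hL.
apply: (@core R k t _ hkt hL) => c c0.
have := sum_sq_shift s c; rewrite hs1 hs2 hsz mulr0 addr0 => <-.
have f0 : forall y, 0 <= (y + c) ^+ 2 by move=> y; apply: sqr_ge0.
have t3 : (0 : R) < (t + 3)%:R / 3 by rewrite divr_gt0 // ltr0n addn3.
clear hs1 hs2.
move: hsz hsort hmem hL; case: s => [|x0 [|x1 [|x2 rest]]] /= _.
all: try by move=> _ _ hL; move: (lt_le_trans t3 hL); rewrite ltxx.
move=> /andP [h10 /andP [h21 _]] hmem hL.
rewrite !big_cons.
have hr : 0 <= \sum_(x <- rest) (x + c) ^+ 2 by apply: sumr_ge0 => y _.
have L0 : 0 <= x2 + c by rewrite addr_ge0 // (le_trans _ hL) // ltW.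
have q1 : (x2 + c) ^+ 2 <= (x1 + c) ^+ 2 by apply: sq_mono; rewrite // lerD2r.
have q0 : (x2 + c) ^+ 2 <= (x0 + c) ^+ 2 by apply: sq_mono; rewrite // lerD2r (le_trans h21).
have fx0 := f0 x0; have fx1 := f0 x1; have fx2 := f0 x2.
move: hmem; rewrite !in_cons => /orP [/eqP ->|/orP [/eqP ->|/orP [/eqP ->|hin]]].
- lra.
- lra.
- lra.
- have := @le_sum_mem (fun y => (y + c) ^+ 2) _ _ f0 hin; lra.
Qed.
End LC.

Theorem theorem3p3 (R : rcfType) (T : finType) (e : rel T) :
  simple_graph e -> regular e -> (3 <= nL e)%N ->
  lambda 3 (line_adj_mx R e) < (nL e)%:R / 3.
Proof.
move=> [Hsym Hirr] [d Hreg] m3.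
have m0 : (0 < nL e)%N by apply: leq_trans m3.
have [E EE] : exists E, E \in edge_set e by apply/set0Pn; rewrite -card_gt0.
move/edgeP: EE => [a [b [hab _]]].
have d1 : (0 < d)%N.
  by rewrite -(Hreg a) card_gt0; apply/set0Pn; exists b; rewrite inE.
have hdle := @deg_le T e Hirr d Hreg a.
have hs := @handshake T e Hsym Hirr d Hreg.
have T0 : (0 < #|T|)%N by apply/card_gt0P; exists a.
set m := nL e in m3 m0 *.
have hm : #|edge_set e| = m by [].
rewrite hm in hs.
have [t ht] : exists t, m = (t + 3)%N by exists (m - 3)%N; lia.
have [k hk] : exists k, d = (k + 1)%N by exists (d - 1)%N; lia.
have hkt : ((k+1)*(k+2) <= 2*(t+3))%N.
  rewrite -ht -hs hk.
  have : (k + 2 <= #|T|)%N by lia.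
  move=> h; rewrite mulnC leq_mul2r; lia.
have hK2 : (d + d - 1 - 1 = 2 * k)%N by lia.
set A := line_adj_mx R e.
have [r [cp trA trA2]] := @sym_spectral R _ _ (A_sym R T e).
have hp := @eig_perm R _ _ _ cp.
rewrite /lambda /=.
have hroot := @A_root R T e Hsym Hirr d Hreg m0.
rewrite hK2 -/A cp in hroot.
rewrite [X in _ < X%:R / 3]ht; apply: (@list_core R _ k t) => //.
- by rewrite (perm_size hp) size_map size_enum_ord.
- apply: sort_sorted => x y; exact: le_total.
- by rewrite (perm_big _ hp) /= big_map big_enum /= -trA /A (A_tr R T e).
- rewrite (perm_big _ hp) /= big_map big_enum /= -trA2 /A (@A_tr2 R T e Hsym Hirr d Hreg) hK2.
  have hn : nL e = (t + 3)%N := ht.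
  rewrite hn !natrM; ring.
- rewrite (perm_mem hp) -root_prod_XsubC big_map big_enum /=.
  by rewrite natrM in hroot.
Qed.
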